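(* Let $q$ be a prime power, $N\ge n\ge 1$, and $1\le d\le n$. Then $\chi'_d(N\times n,q)=q^{Nd}$.
   Context: $\mathbb{F}_q^{N\times n}$ is the set of $N\times n$ matrices over the finite field $\mathbb{F}_q$, with rank distance $d_R(M_1,M_2)=\mathrm{Rk}(M_1-M_2)$. A $d$-distance coloring of $\mathbb{F}_q^{N\times n}$ is a map $\Gamma:\mathbb{F}_q^{N\times n}\to\{1,\dots,L\}$ such that $\Gamma(M_1)\ne\Gamma(M_2)$ whenever $M_1\neq M_2$ and $d_R(M_1,M_2)\le d$. $\chi'_d(N\times n,q)$ denotes the minimum number $L$ of colors in a $d$-distance coloring. *)

(* Defs.v *)
From HB Require Import structures.
From mathcomp Require Import all_boot all_order all_algebra.
Set Implicit Arguments. Unset Strict Implicit. Unset Printing Implicit Defensive.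
Import GRing.Theory.
Local Open Scope ring_scope.

Definition rank_dist (F : fieldType) (N n : nat) (M1 M2 : 'M[F]_(N, n)) : nat :=
  \rank (M1 - M2).

Definition has_d_coloring (F : finFieldType) (N n d L : nat) : bool :=
  [exists Gamma : {ffun 'M[F]_(N, n) -> 'I_L},
     [forall M1 : 'M[F]_(N, n), forall M2 : 'M[F]_(N, n),
        ((M1 != M2) && (rank_dist M1 M2 <= d)%N) ==> (Gamma M1 != Gamma M2)]].

Lemma has_d_coloring_exists (F : finFieldType) (N n d : nat) :
  exists L, has_d_coloring F N n d L.
Proof.
exists #|{: 'M[F]_(N, n)}|; apply/existsP; exists (finfun (@enum_rank _)).
apply/forallP=> M1; apply/forallP=> M2; apply/implyP=> /andP[ne _].
by rewrite !ffunE; apply: contra ne => /eqP/enum_rank_inj ->.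
Qed.

(* chi'_d(N x n, q): minimum number of colours of a d-distance colouring,
   where F is a finite field with q elements *)
Definition chi_d (F : finFieldType) (N n d : nat) : nat :=
  ex_minn (has_d_coloring_exists F N n d).

(* Main.v *)
Require Import Defs.
From HB Require Import structures.
From mathcomp Require Import all_boot all_order all_algebra.
From mathcomp Require Import zify.
From mathcomp Require Import falgebra fieldext separable galois finfield.
Set Implicit Arguments. Unset Strict Implicit. Unset Printing Implicit Defensive.
Import GRing.Theory.
Import VectorInternalTheory.
Local Open Scope ring_scope.

Lemma ext_exists (F : finFieldType) (N : nat) : (0 < N)%N ->
  {L : fieldExtType F | \dim {:L} = N}.
Proof.
move=> N_gt0; set k := #|F|.
have k_gt1 : (1 < k)%N := finNzRing_gt1 F.
pose m := (k ^ N)%N.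
have m_gt1: (m > 1)%N by rewrite (ltn_exp2l 0).
have m_gt0 := ltnW m_gt1; have m1_gt0: (m.-1 > 0)%N by rewrite -ltnS prednK.
pose q (R : nzRingType) : {poly R} := 'X^m - 'X.
have Dq R: q R = ('X^(m.-1) - 1) * ('X - 0).
  by rewrite subr0 mulrBl mul1r -exprSr prednK.
have /FinSplittingFieldFor[/= L splitLq]: q F != 0.
  by rewrite Dq monic_neq0 ?rpredM ?monicXsubC ?monicXnsubC.
rewrite [map_poly _ _]rmorphB rmorphXn /= map_polyX -/(q L) in splitLq.
have [p pr_p pcharFp] := finPcharP F.
have pcharL: p \in [pchar L] by rewrite pchar_lalg.
pose Fm := FinFieldExtType L.
have /finField_galois_generator[/= a _ Da]: (1 <= {:L})%VS by apply: sub1v.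
pose Em := fixedSpace (a ^+ N)%g; rewrite dimv1 expn1 in Da.
suffices cardFm : #|Fm| = m.
  exists L; apply: (@expnI k) => //.
  have H1 := @card_vspace F (finvect_type L) _ (fullv : {vspace finvect_type L}).
  have H2 := @card_vspacef F (finvect_type L) _.
  rewrite H2 in H1.
  rewrite -/m -cardFm; symmetry; exact: H1.
have{splitLq} [zs DqL defL] := splitLq.
have mR : (m%:R : L) = 0.
  have hk : k = (p ^ logn p k)%N := card_pprimeChar pcharFp.
  have -> : m = (p ^ (logn p k * N))%N by rewrite expnM -hk.
  have lk : (0 < logn p k)%N.
    by move: hk k_gt1; case: (logn p k) => // ->; rewrite expn0.
  rewrite natrX (pcharf0 pcharL) expr0n /=.
  by rewrite muln_eq0 eqn0Ngt lk eqn0Ngt N_gt0.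
have Uzs: uniq zs.
  rewrite -separable_prod_XsubC -(eqp_separable DqL) Dq separable_root andbC.
  rewrite /root !hornerE subr_eq0 eq_sym expr0n gtn_eqF ?oner_eq0 //=.
  rewrite cyclotomic.separable_Xn_sub_1 // -subn1 natrB // subr_eq0.
  by rewrite mR eq_sym oner_eq0.
suffices /eq_card->: Fm =i zs.
  apply: succn_inj; rewrite (card_uniqP _) //= -(size_prod_XsubC _ id).
  by rewrite -(eqp_size DqL) size_polyDl size_polyXn // size_polyN size_polyX.
have in_zs: zs =i Em.
  move=> z; rewrite -root_prod_XsubC -(eqp_root DqL) (sameP fixedSpaceP eqP).
  rewrite /root !hornerE subr_eq0 /= /m; congr (_ == z).
  elim: (N) => [|i IHi]; first by rewrite gal_id.
  by rewrite expgSr expnSr exprM IHi galM ?Da ?memvf.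
suffices defEm: Em = {:L}%VS by move=> z; rewrite in_zs defEm memvf.
apply/eqP; rewrite eqEsubv subvf -defL -[Em]subfield_closed agenvS //.
by rewrite subv_add sub1v; apply/span_subvP=> z; rewrite in_zs.
Qed.

Section Main.
Variables (F : finFieldType) (L : fieldExtType F).
Local Notation T := (finvect_type L).
Local Notation m := (vector.dim T).
Local Notation q := #|F|.
Implicit Types (c : {ffun 'I_m -> T}).

Lemma q_gt1 : (1 < q)%N. Proof. exact: finNzRing_gt1. Qed.

Lemma frobD (x y : T) i : (x + y) ^+ (q ^ i) = x ^+ (q ^ i) + y ^+ (q ^ i).
Proof.
have [p pr_p pcharFp] := finPcharP F.
have pcharT: p \in [pchar T] by rewrite pchar_lalg.
apply: exprDn_pchar; rewrite pnatX; apply/orP; left.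
rewrite (card_pprimeChar pcharFp) pnatX pnatE // pcharT //.
Qed.

Lemma expF (a : F) i : a ^+ (q ^ i) = a.
Proof. by elim: i => [|i IH]; rewrite ?expr1 // expnSr exprM IH expf_card. Qed.

Lemma frobZ (a : F) (x : T) i : (a *: x) ^+ (q ^ i) = a *: x ^+ (q ^ i).
Proof. by rewrite exprZn expF. Qed.

Definition lp (c : {ffun 'I_m -> T}) (z : T) : T := \sum_(i < m) c i * z ^+ (q ^ i).
Definition gfun c (u : 'rV[F]_m) : 'rV[F]_m := v2r (lp c (r2v u)).

Lemma lp_lin c (a : F) x y : lp c (a *: x + y) = a *: lp c x + lp c y.
Proof.
rewrite /lp scaler_sumr -big_split /=; apply: eq_bigr => i _.
by rewrite frobD frobZ mulrDr scalerAr.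
Qed.

Lemma gfun_lin c : linear (gfun c).
Proof. by move=> a u v; rewrite /gfun linearP lp_lin linearP. Qed.

HB.instance Definition _ c := GRing.isLinear.Build F 'rV[F]_m 'rV[F]_m *:%R (gfun c) (gfun_lin c).

Definition Phi c : 'M[F]_m := lin1_mx (gfun c).

Lemma mulPhi c u : u *m Phi c = gfun c u.
Proof. exact: mul_rV_lin1. Qed.

Lemma mxsubE (A B : 'M[F]_(1,m)) i j : (A - B) i j = A i j - B i j.
Proof. rewrite !mxE; reflexivity. Qed.

Lemma lpB c c' z : lp (c - c') z = lp c z - lp c' z.
Proof. by rewrite /lp -sumrB; apply: eq_bigr => k _; rewrite !ffunE mulrBl. Qed.

Lemma PhiB c c' : Phi (c - c') = Phi c - Phi c'.
Proof. by apply/matrixP => i j; rewrite !mxE /gfun lpB linearB /= mxsubE. Qed.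

Definition P (c : {ffun 'I_m -> T}) : {poly T} := \sum_(i < m) c i *: 'X^(q ^ i).

Lemma hornerP c z : (P c).[z] = lp c z.
Proof. by rewrite /P horner_sum; apply: eq_bigr => i _; rewrite hornerZ hornerXn. Qed.

Lemma coefP c (j : 'I_m) : (P c)`_(q ^ j) = c j.
Proof.
rewrite /P coef_sum (bigD1 j) //= coefZ coefXn eqxx mulr1 big1 ?addr0 // => i ij.
rewrite coefZ coefXn eqn_exp2l ?q_gt1 //.
have -> : (j == i :> nat) = false by apply/negbTE; rewrite eq_sym.
by rewrite mulr0.
Qed.

Lemma P_neq0 c : c != 0 -> P c != 0.
Proof.
apply: contraNneq => Pc0; apply/eqP/ffunP => j.
by rewrite -coefP Pc0 coef0 ffunE.
Qed.

Lemma size_P c t : (forall i : 'I_m, (t <= i)%N -> c i = 0) ->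
  (size (P c) <= (q ^ t.-1).+1)%N.
Proof.
move=> ct; rewrite /P; apply: leq_trans (size_sum _ _ _) _.
apply/bigmax_leqP => i _; case: (ltnP i t) => h.
  apply: leq_trans (size_scale_leq _ _) _; rewrite size_polyXn ltnS leq_exp2l ?q_gt1 //.
  by rewrite -ltnS (ltn_predK h).
by rewrite ct // scale0r size_poly0.
Qed.

Lemma rank_Phi c t : (t <= m)%N -> c != 0 -> (forall i : 'I_m, (t <= i)%N -> c i = 0) ->
  (m - t < \rank (Phi c))%N.
Proof.
move=> tm cne ct.
set K := kermx (Phi c); set r := \rank K; set rb := row_base K.
pose rs := [seq r2v (v *m rb) : T | v <- enum 'rV[F]_r].
have roots : all (root (P c)) rs.
  apply/allP => _ /mapP[v _ ->]; rewrite rootE hornerP.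
  have sub : (v *m rb <= K)%MS by rewrite (submx_trans (submxMl v rb)) // eq_row_base.
  move/sub_kermxP: sub; rewrite mulPhi /gfun => /eqP.
  by rewrite -(linear0 (@v2r F T)) => /eqP/v2r_inj ->.
have urs : uniq rs.
  rewrite map_inj_uniq ?enum_uniq // => v w /r2v_inj.
  exact: (row_free_inj (row_base_free K)).
have := max_poly_roots (P_neq0 cne) roots urs.
rewrite size_map -cardE card_mx mul1n => H; have := leq_trans H (size_P ct).
rewrite ltnS leq_exp2l ?q_gt1 // /r mxrank_ker.
have : (\rank (Phi c) <= m)%N by apply: rank_leq_row.
case: t tm ct => [|t] tm ct.
  by move=> _ _; case/negP: cne; apply/eqP/ffunP => i; rewrite ffunE ct.
rewrite /=; lia.
Qed.

Lemma Phi_inj : injective Phi.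
Proof.
move=> c1 c2 e; apply/eqP; rewrite -subr_eq0; apply/negPn/negP => ne.
have := @rank_Phi (c1 - c2) m (leqnn m) ne.
rewrite PhiB e subrr mxrank0 subnn ltnn => H.
suff : false by []. apply: H => i; by rewrite leqNgt ltn_ord.
Qed.

Lemma card_T : #|T| = (q ^ m)%N.
Proof.
have H1 := @card_vspace F T _ (fullv : {vspace T}).
have H2 := @card_vspacef F T _.
by rewrite H2 dimvf in H1.
Qed.

Lemma Phi_onto A : A \in codom Phi.
Proof.
apply: (inj_card_onto Phi_inj).
by rewrite card_mx card_ffun card_T card_ord -expnM.
Qed.

Definition Psi A := iinv (Phi_onto A).

Lemma PhiK A : Phi (Psi A) = A.
Proof. exact: f_iinv. Qed.

Lemma Phi0 : Phi 0 = 0.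
Proof. by rewrite -(subrr (0 : {ffun 'I_m -> T})) PhiB subrr. Qed.

Lemma upper n d : (n <= m)%N -> (d <= n)%N ->
  has_d_coloring F m n d (q ^ (m * d)).
Proof.
move=> nm dn.
have dm : (d <= m)%N := leq_trans dn nm.
pose P0 : 'M[F]_(n, m) := pid_mx n.
have P0free : row_free P0 by rewrite /row_free /P0 rank_pid_mx.
have topP (i : 'I_d) : (m - d + i < m)%N by have := ltn_ord i; lia.
pose top (i : 'I_d) : 'I_m := Ordinal (topP i).
pose col (M : 'M[F]_(m, n)) : {ffun 'I_d -> T} := [ffun i => Psi (M *m P0) (top i)].
have E : #|{: {ffun 'I_d -> T}}| = (q ^ (m * d))%N.
  by rewrite card_ffun card_T card_ord -expnM.
apply/existsP; exists [ffun M => cast_ord E (enum_rank (col M))].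
apply/forallP => M1; apply/forallP => M2; apply/implyP => /andP[ne rk].
rewrite !ffunE; apply/negP => /eqP /cast_ord_inj /enum_rank_inj ecol.
pose c := Psi (M1 *m P0) - Psi (M2 *m P0).
have Phic : Phi c = (M1 - M2) *m P0 by rewrite PhiB !PhiK mulmxBl.
have rkc : \rank (Phi c) = \rank (M1 - M2) by rewrite Phic mxrankMfree.
have cne : c != 0.
  apply: contraNneq ne => c0; apply/eqP; apply/eqP; rewrite -subr_eq0 -mxrank_eq0.
  by rewrite -rkc c0 Phi0 mxrank0.
have ct : forall i : 'I_m, (m - d <= i)%N -> c i = 0.
  move=> i hi.
  have jP : (i - (m - d) < d)%N by have := ltn_ord i; lia.
  have := congr1 (fun f : {ffun 'I_d -> T} => f (Ordinal jP)) ecol.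
  rewrite /= !ffunE.
  have -> : top (Ordinal jP) = i by apply: val_inj => /=; rewrite subnKC.
  by move=> ->; rewrite subrr.
have := rank_Phi (leq_subr d m) cne ct.
rewrite rkc subKn //; move: rk; rewrite /rank_dist => h1 h2.
by have := leq_ltn_trans h1 h2; rewrite ltnn.
Qed.

End Main.

Lemma lower (F : finFieldType) N n d L : (d <= n)%N ->
  has_d_coloring F N n d L -> (#|F| ^ (N * d) <= L)%N.
Proof.
move=> dn /existsP[Gamma /forallP HG].
pose Q : 'M[F]_(d, n) := pid_mx d.
have Qfree : row_free Q by rewrite /row_free /Q rank_pid_mx.
have inj : injective (fun X : 'M[F]_(N, d) => Gamma (X *m Q)).
  move=> X1 X2 /= e; apply/eqP; apply/negPn/negP => ne.
  have ne' : X1 *m Q != X2 *m Q.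
    by apply: contra ne => /eqP /(row_free_inj Qfree) ->.
  have := HG (X1 *m Q); move/forallP/(_ (X2 *m Q)).
  rewrite ne' /rank_dist -mulmxBl e eqxx /= implybF.
  have := mxrankM_maxr (X1 - X2) Q; rewrite /Q rank_pid_mx // => ->.
  done.
have := @leq_card _ _ _ inj; rewrite card_mx card_ord.
done.
Qed.

Theorem theorem3p1 (F : finFieldType) (q N n d : nat) :
  #|F| = q -> (1 <= n)%N -> (n <= N)%N -> (1 <= d)%N -> (d <= n)%N ->
  chi_d F N n d = (q ^ (N * d))%N.
Proof.
move=> <- n1 nN d1 dn.
have [L0 hL] := ext_exists F (leq_trans n1 nN).
have hm : vector.dim (finvect_type L0) = N by rewrite -hL dimvf.
have up := @upper F L0 n d.
rewrite hm in up; have {}up := up nN dn.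
rewrite /chi_d; case: ex_minnP => k Hk Hmin.
by apply/eqP; rewrite eqn_leq Hmin // (lower dn Hk).
Qed.
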